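(* Let $T>0$, $p>1$, $E_1\ge0$, $\epsilon\in(0,1)$. Let $\varphi,\varphi_\epsilon\in L^2(\mathbb{R})$ with $\|\varphi-\varphi_\epsilon\|\le\epsilon$, and let $u$ be the exact solution of the backward heat problem with final value $\varphi$, satisfying $\|u(\cdot,0)\|\le E_1$. Choose $\beta=\epsilon^p$ and let $v_\epsilon=R_\beta\varphi_\epsilon$. Then for every $t\in[0,T]$, $$\|u(\cdot,t)-v_\epsilon(\cdot,t)\|\le \epsilon^{\frac{t}{T}}(E_1+1).$$
   Context: $\|\cdot\|$ denotes the norm of $L^2(\mathbb{R})$. The Fourier transform is $\hat\psi(\xi)=\frac{1}{\sqrt{2\pi}}\int_{-\infty}^{\infty}\psi(x)e^{-i\xi x}\,dx$ (extended to $L^2(\mathbb{R})$ as a unitary map). Exact solution: for $\varphi\in L^2(\mathbb{R})$, the exact solution $u$ of $u_t-u_{xx}=0$ on $\mathbb{R}\times(0,T)$, $u(\cdot,T)=\varphi$, is given by $\hat u(\xi,t)=e^{(T-t)\xi^2}\hat\varphi(\xi)$ for $t\in[0,T]$; it is assumed that $u(\cdot,0)\in L^2(\mathbb{R})$. Regularized solution: for $\beta>0$ and $\psi\in L^2(\mathbb{R})$, $R_\beta\psi$ is the function whose Fourier transform in $x$ is $\widehat{(R_\beta\psi)}(\xi,t)=\frac{e^{-t\xi^2}}{\beta e^{(p-1)T\xi^2}+e^{-T\xi^2}}\hat\psi(\xi)=\frac{e^{(T-t)\xi^2}}{1+\beta e^{pT\xi^2}}\hat\psi(\xi)$, $t\in[0,T]$.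 *)

(* Defs.v *)
From HB Require Import structures.
From mathcomp Require Import all_boot all_order all_algebra.
From mathcomp Require Import all_classical all_reals all_analysis.
From mathcomp Require Import complex.
Set Implicit Arguments. Unset Strict Implicit. Unset Printing Implicit Defensive.
Import Order.TTheory GRing.Theory Num.Theory.
Local Open Scope ring_scope.
Local Open Scope classical_set_scope.

Section BackwardHeat.
Context {R : realType}.
Local Notation mu := (@lebesgue_measure R).

Definition cRe (z : R[i]) : R := complex.Re z.
Definition cIm (z : R[i]) : R := complex.Im z.

Definition sq_integrand (f : R -> R[i]) (x : R) : R :=
  cRe (f x) ^+ 2 + cIm (f x) ^+ 2.

Definition L2 (f : R -> R[i]) : Prop :=
  measurable_fun setT (cRe \o f) /\ measurable_fun setT (cIm \o f) /\
  (\int[mu]_x (sq_integrand f x)%:E < +oo)%E.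

Definition L2norm (f : R -> R[i]) : R :=
  Num.sqrt (fine (\int[mu]_x (sq_integrand f x)%:E)).

Definition L1 (f : R -> R[i]) : Prop :=
  mu.-integrable setT (EFin \o (cRe \o f)) /\
  mu.-integrable setT (EFin \o (cIm \o f)).

Definition fourier_integral (f : R -> R[i]) (xi : R) : R[i] :=
  let g := fun x => f x * Complex (cos (xi * x)) (- sin (xi * x)) in
  real_complex R (Num.sqrt (2 * pi))^-1 *
    Complex (Rintegral mu setT (cRe \o g)) (Rintegral mu setT (cIm \o g)).

Definition ae_eq (f g : R -> R[i]) : Prop := {ae mu, forall x, f x = g x}.

(* F is the Fourier transform on L^2(R): the (unitary) extension of the
   Fourier integral from L^1 \cap L^2 to L^2, acting on representatives. *)
Definition is_L2_fourier (F : (R -> R[i]) -> R -> R[i]) : Prop :=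
  (forall f, L2 f -> L2 (F f)) /\
      (forall f g, L2 f -> L2 g -> ae_eq f g -> ae_eq (F f) (F g)) /\
      (forall f g (a b : R[i]), L2 f -> L2 g ->
          ae_eq (F (fun x => a * f x + b * g x)) (fun xi => a * F f xi + b * F g xi)) /\
      (forall f, L2 f -> L2norm (F f) = L2norm f) /\
      (forall g, L2 g -> exists f, L2 f /\ ae_eq (F f) g) /\
      (forall f, L2 f -> L1 f -> ae_eq (F f) (fourier_integral f)).

(* u (written u x t) is the exact solution of u_t - u_xx = 0, u(.,T) = phi:
   u(.,t) in L^2 and \hat u(xi,t) = e^{(T-t) xi^2} \hat phi(xi), t in [0,T]. *)
Definition exact_solution (F : (R -> R[i]) -> R -> R[i]) (T : R)
    (phi : R -> R[i]) (u : R -> R -> R[i]) : Prop :=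
  forall t, 0 <= t <= T ->
    L2 (fun x => u x t) /\
    ae_eq (F (fun x => u x t))
          (fun xi => real_complex R (expR ((T - t) * xi ^+ 2)) * F phi xi).

Definition regularized_solution (F : (R -> R[i]) -> R -> R[i]) (T p beta : R)
    (psi : R -> R[i]) (v : R -> R -> R[i]) : Prop :=
  forall t, 0 <= t <= T ->
    L2 (fun x => v x t) /\
    ae_eq (F (fun x => v x t))
          (fun xi => real_complex R (expR ((T - t) * xi ^+ 2) /
                                     (1 + beta * expR (p * T * xi ^+ 2))) * F psi xi).

End BackwardHeat.

(* Main.v *)
Require Import Defs.
From HB Require Import structures.
From mathcomp Require Import all_boot all_order all_algebra.
From mathcomp Require Import all_classical all_reals all_analysis.
From mathcomp Require Import complex.
From mathcomp Require Import ring lra.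
From mathcomp Require Import measurable_realfun.
Import Order.TTheory GRing.Theory Num.Theory.
Local Open Scope ring_scope.

Lemma sq2_le (R : realType) (l X Y : R) : 0 < l ->
  (X + Y) ^+ 2 <= (1 + l) * X ^+ 2 + (1 + l^-1) * Y ^+ 2.
Proof.
move=> l0.
have -> : (1 + l) * X ^+ 2 + (1 + l^-1) * Y ^+ 2 = (X + Y) ^+ 2 + l^-1 * (l * X - Y) ^+ 2.
  by field; rewrite gt_eqF.
rewrite lerDl; apply: mulr_ge0; [by rewrite invr_ge0 ltW|exact: sqr_ge0].
Qed.

Lemma sqc_comb (R : realType) (l a b : R) (z w : R[i]) : 0 < l ->
  cRe (real_complex R a * z + real_complex R b * w) ^+ 2 + cIm (real_complex R a * z + real_complex R b * w) ^+ 2 <=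
  (1 + l) * a ^+ 2 * (cRe z ^+ 2 + cIm z ^+ 2) + (1 + l^-1) * b ^+ 2 * (cRe w ^+ 2 + cIm w ^+ 2).
Proof.
move=> l0; case: z => z1 z2; case: w => w1 w2; rewrite /cRe /cIm /=.
have h1 := @sq2_le R l (a * z1) (b * w1) l0.
have h2 := @sq2_le R l (a * z2) (b * w2) l0.
have -> : a * z1 - 0 * z2 + (b * w1 - 0 * w2) = a * z1 + b * w1 by ring.
have -> : a * z2 + 0 * z1 + (b * w2 + 0 * w1) = a * z2 + b * w2 by ring.
apply: (le_trans (lerD h1 h2)); rewrite !exprMn; lra.
Qed.

Lemma core_bounds (R : realType) (b p L : R) : 0 <= b -> b <= 1 -> 1 < p ->
  expR (p * L) / (1 + expR (p * L)) <= expR (b * L) /\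
  expR ((1 - b) * L) <= 1 + expR (p * L).
Proof.
move=> b0 b1 p1.
have ey := expR_gt0 (p * L).
have h1 : expR (p * L) / (1 + expR (p * L)) <= 1.
  by rewrite ler_pdivrMr ?mul1r ?lerDr //; lra.
have h2 : expR (p * L) / (1 + expR (p * L)) <= expR (p * L).
  by rewrite ler_pdivrMr; [rewrite ler_peMr; lra | lra].
have [L0|L0] := leP 0 L.
- split.
  + apply: (le_trans h1).
    have := @expR_ge1Dx R (b * L); have := mulr_ge0 b0 L0; lra.
  + apply: le_trans (_ : expR (p * L) <= _); last lra.
    by rewrite ler_expR; apply: ler_wpM2r => //; lra.
- split.
  + apply: (le_trans h2); rewrite ler_expR; apply: ler_wnM2r; lra.
  + apply: le_trans (_ : 1 <= _); last lra.
    by rewrite expR_le1; apply: mulr_ge0_le0; lra.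
Qed.

Lemma decomp (R : realType) (c d s : R) (A B : R[i]) : s != 0 ->
  1 * (real_complex R c * A) + (-1) * (real_complex R d * B) =
  real_complex R ((c - d) / s) * (real_complex R s * A) +
  real_complex R d * (1 * A + (-1) * B).
Proof.
move=> s0.
rewrite [X in _ = X + _]mulrA -rmorphM /= divfK // rmorphB /=.
ring.
Qed.

Lemma powR_exp (R : realType) (a x : R) : 0 < a -> a `^ x = expR (x * ln a).
Proof. by move=> a0; rewrite /powR gt_eqF. Qed.

Lemma mult_bounds (R : realType) (T t p eps X : R) : 0 < T -> 0 <= t -> t <= T ->
  1 < p -> 0 < eps ->
  let c := expR ((T - t) * X) in
  let d := expR ((T - t) * X) / (1 + eps `^ p * expR (p * T * X)) in
  [/\ 0 <= (c - d) / expR ((T - 0) * X), (c - d) / expR ((T - 0) * X) <= eps `^ (t / T),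
      0 <= d & d <= eps `^ (t / T) / eps].
Proof.
move=> T0 t0 tT p1 e0 c d.
set L := ln eps + T * X.
set b := t / T.
have b0 : 0 <= b by rewrite /b divr_ge0 // ltW.
have b1 : b <= 1 by rewrite /b ler_pdivrMr // mul1r.
have bT : b * T = t by rewrite /b divfK // gt_eqF.
have Ey : eps `^ p * expR (p * T * X) = expR (p * L).
  by rewrite powR_exp // -expRD /L; congr expR; ring.
have Ee : eps `^ b = expR (b * L) * expR (- (t * X)).
  by rewrite powR_exp // -expRD /L; congr expR; rewrite -bT; ring.
have [cb1 cb2] := @core_bounds R b p L b0 b1 p1.
have ey := expR_gt0 (p * L).
have y1 : 0 < 1 + expR (p * L) by lra.
have Ed : d = c / (1 + expR (p * L)) by rewrite /d Ey.
have Ec : c = expR (- (t * X)) * expR ((T - 0) * X) by rewrite /c -expRD; congr expR; ring.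
have s0 : expR ((T - 0) * X) != 0 by rewrite gt_eqF // expR_gt0.
have Ek1 : (c - d) / expR ((T - 0) * X) =
   expR (- (t * X)) * (expR (p * L) / (1 + expR (p * L))).
  by rewrite Ed Ec; field; rewrite s0 /= gt_eqF.
have c0 : 0 < c by rewrite /c expR_gt0.
split.
- by rewrite Ek1 mulr_ge0 // ?divr_ge0 // ltW // expR_gt0.
- rewrite Ek1 Ee [X in _ <= X]mulrC ler_wpM2l //; exact: ltW (expR_gt0 _).
- by rewrite Ed divr_ge0 // ltW.
- have Ec2 : c = expR ((1 - b) * L) * (eps `^ b / eps).
    rewrite /c powR_exp // -[X in _ / X](@lnK _ eps) ?posrE // -expRN -!expRD.
    congr expR; rewrite /L; rewrite -[in LHS]bT; ring.
  rewrite Ed Ec2 mulrAC; apply: ler_piMl.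
    by rewrite divr_ge0 ?powR_ge0 // ltW.
  by rewrite ler_pdivrMr // mul1r.
Qed.

Section L2facts.
Context {R : realType}.
Local Notation mu := (@lebesgue_measure R).

Lemma sqi_ge0 (f : R -> R[i]) x : 0 <= sq_integrand f x.
Proof. by rewrite /sq_integrand addr_ge0 // sqr_ge0. Qed.

Lemma sqi_meas (f : R -> R[i]) : measurable_fun setT (cRe \o f) ->
  measurable_fun setT (cIm \o f) ->
  measurable_fun [set: R] (EFin \o sq_integrand f).
Proof.
move=> mre mim; apply/measurable_EFinP.
rewrite /sq_integrand; apply: measurable_funD; exact: measurable_funX.
Qed.

Lemma L2_meas (f : R -> R[i]) : L2 f ->
  measurable_fun [set: R] (EFin \o sq_integrand f).
Proof. by case=> mre [mim _]; exact: sqi_meas. Qed.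

Lemma L2_int (f : R -> R[i]) : L2 f ->
  (\int[mu]_x (sq_integrand f x)%:E = (L2norm f ^+ 2)%:E)%E.
Proof.
case=> _ [_ fin].
have i0 : (0 <= \int[mu]_x (sq_integrand f x)%:E)%E.
  by apply: integral_ge0 => x _; rewrite lee_fin sqi_ge0.
rewrite /L2norm sqr_sqrtr ?fine_ge0 // fineK //.
by rewrite ge0_fin_numE.
Qed.
End L2facts.

Section L2sub.
Context {R : realType}.
Local Notation mu := (@lebesgue_measure R).

Lemma L2_sub (f g : R -> R[i]) : L2 f -> L2 g -> L2 (fun x => f x - g x).
Proof.
move=> Lf Lg; have Lf' := Lf; have Lg' := Lg.
case: Lf => mfr [mfi _]; case: Lg => mgr [mgi _].
have Er : cRe \o (fun x => f x - g x) = (fun x => (cRe \o f) x - (cRe \o g) x).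
  by apply: funext => x /=; case: (f x) => ? ?; case: (g x).
have Ei : cIm \o (fun x => f x - g x) = (fun x => (cIm \o f) x - (cIm \o g) x).
  by apply: funext => x /=; case: (f x) => ? ?; case: (g x).
have mr : measurable_fun setT (cRe \o (fun x => f x - g x)).
  by rewrite Er; apply: measurable_funB.
have mi : measurable_fun setT (cIm \o (fun x => f x - g x)).
  by rewrite Ei; apply: measurable_funB.
split=> //; split=> //.
apply: (@le_lt_trans _ _ (\int[mu]_x ((2 * sq_integrand f x)%:E + (2 * sq_integrand g x)%:E))%E).
  apply: ge0_le_integral => //.
  - by move=> x _; rewrite lee_fin sqi_ge0.
  - exact: sqi_meas.
  - apply: emeasurable_funD; apply/measurable_EFinP; apply: measurable_funM => //;
      apply/measurable_EFinP; exact: L2_meas.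
  - move=> x _; rewrite -EFinD lee_fin /sq_integrand /cRe /cIm.
    case: (f x) => a b; case: (g x) => c d /=.
    have := sqr_ge0 (a + c); have := sqr_ge0 (b + d); rewrite !sqrrD; lra.
rewrite ge0_integralD //.
- under eq_integral => x _ do rewrite EFinM.
  rewrite ge0_integralZl_EFin //; last exact: L2_meas; last by move=> x _; rewrite lee_fin sqi_ge0.
  under [X in (_ + X)%E]eq_integral => x _ do rewrite EFinM.
  rewrite ge0_integralZl_EFin //; last exact: L2_meas; last by move=> x _; rewrite lee_fin sqi_ge0.
  by rewrite !L2_int // -!EFinM -EFinD ltry.
- by move=> x _; rewrite lee_fin mulr_ge0 // sqi_ge0.
- apply/measurable_EFinP; apply: measurable_funM => //; apply/measurable_EFinP; exact: L2_meas.
- by move=> x _; rewrite lee_fin mulr_ge0 // sqi_ge0.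
- apply/measurable_EFinP; apply: measurable_funM => //; apply/measurable_EFinP; exact: L2_meas.
Qed.
End L2sub.

Lemma lam_final (R : realType) (X A E : R) : 0 <= E -> 0 < A ->
  (forall l, 0 < l -> X <= (1 + l) * A * E ^+ 2 + (1 + l^-1) * A) ->
  X <= A * (E + 1) ^+ 2.
Proof.
move=> E0 A0 H.
have [E0'|E0'] := eqVneq E 0.
- subst E; apply/ler_addgt0Pr => del del0.
  have := H (A / del) (divr_gt0 A0 del0).
  have -> : (1 + (A / del)^-1) * A = A + del by field; rewrite !gt_eqF.
  rewrite expr0n /= mulr0 add0r; lra.
- have Ep : 0 < E by rewrite lt0r E0' E0.
  have := H (E^-1); rewrite invr_gt0 invrK => /(_ Ep).
  have -> : (1 + E^-1) * A * E ^+ 2 = A * (E ^+ 2 + E) by field.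
  move=> h; apply: (le_trans h); rewrite sqrrD1.
  have : 0 <= A * E by rewrite mulr_ge0 // ltW.
  nra.
Qed.

Theorem theorem3 (R : realType) (F : (R -> R[i]) -> R -> R[i])
  (HF : is_L2_fourier F)
  (T p E1 eps : R) (HT : 0 < T) (Hp : 1 < p) (HE1 : 0 <= E1)
  (Heps0 : 0 < eps) (Heps1 : eps < 1)
  (phi phie : R -> R[i]) (Hphi : L2 phi) (Hphie : L2 phie)
  (Hdist : L2norm (fun x => phi x - phie x) <= eps)
  (u : R -> R -> R[i]) (Hu : exact_solution F T phi u)
  (Hu0 : L2norm (fun x => u x 0) <= E1)
  (v : R -> R -> R[i]) (Hv : regularized_solution F T p (eps `^ p) phie v) :
  forall t, 0 <= t <= T ->
    L2norm (fun x => u x t - v x t) <= eps `^ (t / T) * (E1 + 1).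
Proof.
move=> t htT; have /andP[t0 tT] := htT.
case: HF => [HL2 [_ [Hlin [Hiso _]]]].
have [LU FU] := Hu t htT.
have [LU0 FU0] := Hu 0 (introT andP (conj (lexx 0) (ltW HT))).
have [LV FV] := Hv t htT.
have LD := @L2_sub _ _ _ LU LV.
have LDel := @L2_sub _ _ _ Hphi Hphie.
have ED : (fun x => u x t - v x t) = (fun x => 1 * u x t + (-1) * v x t).
  by apply: funext => x; rewrite mul1r mulN1r.
have EDel : (fun x => phi x - phie x) = (fun x => 1 * phi x + (-1) * phie x).
  by apply: funext => x; rewrite mul1r mulN1r.
have FD := Hlin _ _ 1 (-1) LU LV.
have FDel := Hlin _ _ 1 (-1) Hphi Hphie.
rewrite -(Hiso _ LD) ED.
rewrite -(Hiso _ LDel) EDel in Hdist.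
rewrite -(Hiso _ LU0) in Hu0.
rewrite ED in LD; rewrite EDel in LDel.
have LFD := HL2 _ LD; have LFDel := HL2 _ LDel; have LFU0 := HL2 _ LU0.
set e := eps `^ (t / T).
have e0 : 0 < e by rewrite powR_gt0.
set X := L2norm (F (fun x => 1 * u x t + -1 * v x t)).
have X0 : 0 <= X by rewrite /X /L2norm sqrtr_ge0.
set N0 := L2norm (F (fun x => u x 0)) in Hu0 *.
set ND := L2norm (F (fun x => 1 * phi x + -1 * phie x)) in Hdist *.
have N00 : 0 <= N0 by rewrite /N0 /L2norm sqrtr_ge0.
have ND0 : 0 <= ND by rewrite /ND /L2norm sqrtr_ge0.
suff : X ^+ 2 <= (e * (E1 + 1)) ^+ 2.
  have eE : 0 <= e * (E1 + 1) by apply: mulr_ge0; [exact: ltW | apply: addr_ge0].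
  move=> h; rewrite -(ler_pXn2r (n := 2)) // nnegrE.
rewrite exprMn; apply: lam_final => //; first by rewrite exprn_gt0.
move=> l l0.
have HI : X ^+ 2 <= (1 + l) * e ^+ 2 * N0 ^+ 2 + (1 + l^-1) * (e / eps) ^+ 2 * ND ^+ 2.
  set K1 := (1 + l) * e ^+ 2; set K2 := (1 + l^-1) * (e / eps) ^+ 2.
  have K10 : 0 <= K1 by apply: mulr_ge0; [lra | exact: sqr_ge0].
  have K20 : 0 <= K2 by apply: mulr_ge0; [apply: addr_ge0 => //; rewrite invr_ge0 ltW | exact: sqr_ge0].
  have m1 := @L2_meas _ _ LFU0; have m2 := @L2_meas _ _ LFDel.
  have Eint : (\int[@lebesgue_measure R]_x
      (K1 * sq_integrand (F (fun x => u x 0)) x +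
       K2 * sq_integrand (F (fun x => 1 * phi x + -1 * phie x)) x)%:E =
      (K1 * N0 ^+ 2 + K2 * ND ^+ 2)%:E)%E.
    under eq_integral => x _ do rewrite EFinD.
    rewrite ge0_integralD //.
    - under eq_integral => x _ do rewrite EFinM.
      rewrite ge0_integralZl_EFin //; last by move=> x _; rewrite lee_fin sqi_ge0.
      under [X in (_ + X)%E]eq_integral => x _ do rewrite EFinM.
      rewrite ge0_integralZl_EFin //; last by move=> x _; rewrite lee_fin sqi_ge0.
      by rewrite !L2_int // -!EFinM -EFinD.
    - by move=> x _; rewrite lee_fin mulr_ge0 // sqi_ge0.
    - apply/measurable_EFinP; apply: measurable_funM => //; exact/measurable_EFinP.
    - by move=> x _; rewrite lee_fin mulr_ge0 // sqi_ge0.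
    - apply/measurable_EFinP; apply: measurable_funM => //; exact/measurable_EFinP.
  rewrite -lee_fin -(@L2_int _ _ LFD) -Eint.
  apply: ae_ge0_le_integral => //.
  - by move=> x _; rewrite lee_fin sqi_ge0.
  - exact: (@L2_meas _ _ LFD).
  - by move=> x _; rewrite lee_fin addr_ge0 // mulr_ge0 // sqi_ge0.
  - apply/measurable_EFinP; apply: measurable_funD; apply: measurable_funM => //;
      exact/measurable_EFinP.
  rewrite /Defs.ae_eq in FD FDel FU FU0 FV.
  near=> x => _.
  rewrite lee_fin /sq_integrand.
  have /= H0 := near FD x; have /= HH := near FDel x.
  have /= H1 := near FU x; have /= H2 := near FV x; have /= H3 := near FU0 x.
  rewrite HH; [rewrite H0; [rewrite H1; [rewrite H2; [rewrite H3|]|]|]|]; last first.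
  all: try by end_near.
  have [k10 k1e d0 de] := @mult_bounds R T t p eps (x ^+ 2) HT t0 tT Hp Heps0.
  have s0 : expR ((T - 0) * x ^+ 2) != 0 by rewrite gt_eqF // expR_gt0.
  rewrite (decomp _ _ _ _ (F phi x) (F phie x) s0).
  apply: le_trans (sqc_comb _ _ _ _ _ _ l0) _.
  apply: lerD; (apply: ler_wpM2r; first by rewrite addr_ge0 // sqr_ge0).
    apply: ler_wpM2l; first lra.
    by rewrite ler_pXn2r // nnegrE // ltW.
  apply: ler_wpM2l; first by apply: addr_ge0 => //; rewrite invr_ge0 ltW.
  rewrite ler_pXn2r // nnegrE.
  by rewrite divr_ge0 // ltW.
apply: (le_trans HI); apply: lerD.
  by apply: ler_wpM2l; [apply: mulr_ge0; [lra | exact: sqr_ge0] |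
     rewrite ler_pXn2r // nnegrE].
rewrite -mulrA; apply: ler_wpM2l; first by apply: addr_ge0 => //; rewrite invr_ge0 ltW.
have : ND ^+ 2 <= eps ^+ 2 by rewrite ler_pXn2r // nnegrE ltW.
rewrite expr_div_n mulrAC ler_pdivrMr ?exprn_gt0 // => h.
by apply: ler_wpM2l => //; exact: sqr_ge0.
Unshelve. all: by end_near.
Qed.
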